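(* For all $n\ge k\ge1$, $$\mathbf{Sf}_{n,k}(p,q)\big|_{p^0}=q^{n-k}\begin{bmatrix} n-1\\ k-1\end{bmatrix}_q,$$ and for all $n>k\ge3$, $$\mathbf{Sf}_{n,k}(p,q)\big|_{p}=q^{n-k}\sum_{s=1}^{k-2}s\,q^{s-1}\sum_{i=0}^{n-k-1}q^{i(s+1)}\begin{bmatrix} i+k-s-2\\ i\end{bmatrix}_q\begin{bmatrix} s+n-k-i\\ s+1\end{bmatrix}_q.$$
   Context: $F_1(p,q)=q$, $F_2(p,q)=q^2$ and $F_m(p,q)=qF_{m-1}(p,q)+pF_{m-2}(p,q)$ for $m\ge3$. Let $(x)_{\downarrow_{F,p,q,0}}=1$ and $(x)_{\downarrow_{F,p,q,k}}=x(x-F_1(p,q))\cdots(x-F_{k-1}(p,q))$ for $k\ge1$. Define $\mathbf{Sf}_{n,k}(p,q)$ for $0\le k\le n$ by $x^n=\sum_{k=0}^n\mathbf{Sf}_{n,k}(p,q)(x)_{\downarrow_{F,p,q,k}}$; it is a polynomial in $p,q$. For a polynomial $f$ in $p$ (with coefficients polynomials in $q$), $f|_{p^s}$ denotes the coefficient of $p^s$. $[m]_q=1+q+\cdots+q^{m-1}$, $[m]_q!=[m]_q[m-1]_q\cdots[1]_q$ with $[0]_q!=1$, and $\begin{bmatrix} n\\ k\end{bmatrix}_q=\frac{[n]_q!}{[k]_q![n-k]_q!}$. *)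

(* Defs.v *)
(* Polynomials in p,q: {poly {poly int}}, the outer variable
   is p, the inner one (coefficients) is q. *)
From mathcomp Require Import all_boot all_order all_algebra.
Set Implicit Arguments. Unset Strict Implicit. Unset Printing Implicit Defensive.
Import GRing.Theory.
Local Open Scope ring_scope.

Definition PQ := {poly {poly int}}.
Definition qv : PQ := ('X : {poly int})%:P.
Definition pv : PQ := 'X.

(* Fibonacci polynomials, with F_0 := 0 (convenient for the falling factorial) *)
Fixpoint Fib (m : nat) : PQ :=
  match m with
  | 0 => 0
  | 1 => qv
  | 2 => qv ^+ 2
  | (m'.+1 as m1).+1 => qv * Fib m1 + pv * Fib m'
  end.

Definition ffallF (k : nat) : {poly PQ} := \prod_(i < k) ('X - (Fib i)%:P).

Definition qint (m : nat) : {poly int} := \sum_(i < m) 'X^i.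
Definition qfact (m : nat) : {poly int} := \prod_(i < m) qint i.+1.
Definition qbinom (n k : nat) : {poly int} := qfact n %/ (qfact k * qfact (n - k)).

(* Main.v *)
Require Import Defs.
From mathcomp Require Import all_boot all_order all_algebra.
From mathcomp Require Import zify ring.
Import GRing.Theory.
Local Open Scope ring_scope.
Fixpoint QB (n k : nat) : {poly int} :=
  match n, k with
  | _, 0 => 1
  | 0, _.+1 => 0
  | n'.+1, k'.+1 => QB n' k' + 'X^(k'.+1) * QB n' k'.+1
  end.

Lemma QB0 n : QB n 0 = 1. Proof. by case: n. Qed.
Lemma QBS n k : QB n.+1 k.+1 = QB n k + 'X^(k.+1) * QB n k.+1. Proof. by []. Qed.

Lemma QB_gt n k : (n < k)%N -> QB n k = 0.
Proof.
elim: n k => [|n IH] [|k] //= H.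
by rewrite !IH ?mulr0 ?addr0 //; lia.
Qed.

Lemma QBnn n : QB n n = 1.
Proof. by elim: n => //= n ->; rewrite QB_gt ?mulr0 ?addr0. Qed.

Lemma qintD a b : qint (a + b) = qint a + 'X^a * qint b.
Proof.
rewrite /qint big_split_ord /= mulr_sumr; congr (_ + _).
by apply: eq_bigr => i _; rewrite exprD.
Qed.

Lemma qfactS m : qfact m.+1 = qfact m * qint m.+1.
Proof. by rewrite /qfact big_ord_recr. Qed.

Lemma qint_monic m : qint m.+1 \is monic.
Proof.
elim: m => [|m IH]; first by rewrite /qint big_ord1 expr0 monic1.
have -> : qint m.+2 = 'X^(m.+1) + qint m.+1 by rewrite /qint big_ord_recr /= addrC.
rewrite monicE lead_coefDl ?lead_coefXn //.
rewrite size_polyXn.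
have := monic_neq0 IH; have := IH; rewrite monicE => /eqP.
move=> _ _.
rewrite /qint; apply: (leq_ltn_trans (size_sum _ _ _)).
apply/bigmax_leqP => i _; rewrite size_polyXn; have := ltn_ord i; lia.
Qed.

Lemma qfact_monic m : qfact m \is monic.
Proof. by apply: monic_prod => i _; apply: qint_monic. Qed.

Lemma qfact_QB n k : (k <= n)%N -> qfact n = QB n k * (qfact k * qfact (n - k)).
Proof.
elim: n k => [|n IH] k.
  by rewrite leqn0 => /eqP ->; rewrite /= /qfact !big_ord0 !mulr1.
case: k => [_|k Hk]; first by rewrite QB0 mul1r subn0 /qfact big_ord0 mul1r.
rewrite QBS subSS qfactS.
have E1 := IH k Hk.
have [Hlt|Heq] := ltnP k n.
  have E2 := IH k.+1 Hlt.
  have Eq : qint n.+1 = qint k.+1 + 'X^(k.+1) * qint (n - k).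
    by rewrite -qintD; congr qint; lia.
  rewrite Eq mulrDr.
  have Ef : qfact (n - k) = qfact (n - k.+1) * qint (n - k).
    have -> : (n - k = (n - k.+1).+1)%N by lia.
    by rewrite qfactS.
  rewrite [in X in X + _ = _]E1 [in X in _ + X = _]E2 Ef qfactS; ring.
have -> : k = n by lia.
rewrite QBnn QB_gt // subnn mulr0 addr0 mul1r /qfact big_ord0 mulr1.
by rewrite -qfactS.
Qed.

Lemma qbinomE n k : (k <= n)%N -> qbinom n k = QB n k.
Proof.
move=> H; rewrite /qbinom (qfact_QB n k H) Pdiv.IdomainMonic.mulpK //.
by rewrite monicMl qfact_monic.
Qed.

Lemma QB_sym n k : (k <= n)%N -> QB n k = QB n (n - k).
Proof.
move=> H; rewrite -qbinomE // -qbinomE ?leq_subr //.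
by rewrite /qbinom subKn // mulrC.
Qed.
Lemma FibSS k : Fib k.+3 = qv * Fib k.+2 + pv * Fib k.+1. Proof. by []. Qed.

Lemma coef_qvM (p : PQ) i : (qv * p)`_i = 'X * p`_i.
Proof. by rewrite /qv coefCM. Qed.
Lemma coef_pvM (p : PQ) i : (pv * p)`_i.+1 = p`_i.
Proof. by rewrite /pv coefXM. Qed.
Lemma coef_pvM0 (p : PQ) : (pv * p)`_0 = 0.
Proof. by rewrite /pv coefXM. Qed.

Lemma Fib_coef0 k : (Fib k.+1)`_0 = 'X^(k.+1).
Proof.
suff H : forall k, (Fib k.+1)`_0 = 'X^(k.+1) /\ (Fib k.+2)`_0 = 'X^(k.+2) by exact: (H k).1.
clear k; elim=> [|k [_ IH]].
  by rewrite /= /qv -rmorphXn !coefC /= expr1.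
split => //; rewrite FibSS coefD coef_qvM coef_pvM0 addr0 IH -exprS //.
Qed.

Lemma Fib0_coef0 : (Fib 0)`_0 = 0. Proof. by rewrite coef0. Qed.

Lemma Fib_coef1 k : (Fib k)`_1 = (k-2)%:R * 'X^(k-2).
Proof.
suff H : forall k, (Fib k)`_1 = (k-2)%:R * 'X^(k-2) /\ (Fib k.+1)`_1 = (k.+1-2)%:R * 'X^(k.+1-2).
  exact: (H k).1.
clear k; elim=> [|k [_ IH]].
  by rewrite /= /qv !coef0 coefC /= !mul0r.
split => //.
case: k IH => [|k] IH.
  by rewrite /= /qv -rmorphXn coefC /= mul0r.
rewrite FibSS coefD coef_qvM coef_pvM IH Fib_coef0.
have -> : (k.+2 - 2 = k)%N by lia.
have -> : (k.+3 - 2 = k.+1)%N by lia.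
by rewrite exprS -[in RHS](addn1 k) natrD; ring.
Qed.

Fixpoint Sp (n k : nat) : PQ :=
  match n, k with
  | 0, 0 => 1
  | 0, _.+1 => 0
  | _.+1, 0 => 0
  | n'.+1, k'.+1 => Sp n' k' + Fib k'.+1 * Sp n' k'.+1
  end.
Lemma SpS n k : Sp n.+1 k.+1 = Sp n k + Fib k.+1 * Sp n k.+1.
Proof. by []. Qed.

Lemma coefM0 (p q : PQ) : (p * q)`_0 = p`_0 * q`_0.
Proof. by rewrite coefM big_ord1. Qed.
Lemma coefM1 (p q : PQ) : (p * q)`_1 = p`_0 * q`_1 + p`_1 * q`_0.
Proof. by rewrite coefM big_ord_recr big_ord1. Qed.

Lemma a_rec n k : (Sp n.+1 k.+1)`_0 = (Sp n k)`_0 + 'X^(k.+1) * (Sp n k.+1)`_0.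
Proof. by rewrite SpS coefD coefM0 Fib_coef0. Qed.

Lemma b_rec n k : (Sp n.+1 k.+1)`_1 = (Sp n k)`_1 + 'X^(k.+1) * (Sp n k.+1)`_1
   + (k-1)%:R * 'X^(k-1) * (Sp n k.+1)`_0.
Proof.
rewrite SpS coefD coefM1 Fib_coef0 Fib_coef1 addrA.
by have -> : (k.+1 - 2 = k - 1)%N by lia.
Qed.

Lemma Sp_gt n k : (n < k)%N -> Sp n k = 0.
Proof.
elim: n k => [|n IH] [|k] //= H.
by rewrite !IH ?mulr0 ?addr0 //; lia.
Qed.

Lemma a_closed n k : (Sp n.+1 k.+1)`_0 = 'X^(n-k) * QB n k.
Proof.
elim: n k => [|n IH] k.
  rewrite a_rec; case: k => [|k] /=; first by rewrite coefC /= coef0 mulr0 addr0 expr0 mulr1.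
  by rewrite !coef0 mulr0 addr0 mulr0.
rewrite a_rec; case: k => [|k].
  by rewrite coef0 add0r IH subn0 QB0 !mulr1 -exprS.
rewrite !IH QBS mulrDr subSS; congr (_ + _).
have [Hlt|Hge] := ltnP k n.
  rewrite mulrA -exprD mulrA -exprD.
  by have -> : (k.+2 + (n - k.+1) = n - k + k.+1)%N by lia.
by rewrite QB_gt ?mulr0 //; lia.
Qed.

Definition V' (s c m : nat) : {poly int} :=
  'X^m * \sum_(i < m.+1) ('X^(i * (s + 1)) * QB (i + c) c * QB (s + m.+1 - i) s.+1).

Lemma QB_pas i c : QB (i.+1 + c.+1) c.+1 = QB (i.+1 + c) c + 'X^(c.+1) * QB (i + c.+1) c.+1.
Proof.
have -> : (i.+1 + c.+1 = (i.+1 + c).+1)%N by lia.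
by rewrite QBS; have -> : (i.+1 + c = i + c.+1)%N by lia.
Qed.

Lemma R1a s c : V' s c.+1 0 = V' s c 0.
Proof. rewrite /V' !big_ord1 !add0n !QBnn //. Qed.

Lemma R1b s c m : V' s c.+1 m.+1 = V' s c m.+1 + 'X^(s + c + 3) * V' s c.+1 m.
Proof.
rewrite /V' !mulr_sumr.
rewrite big_ord_recl [X in _ = X + _]big_ord_recl -addrA.
congr (_ + _); first by rewrite !add0n !QBnn.
rewrite -big_split; apply: eq_bigr => i _.
rewrite lift0 QB_pas.
have -> : (s + m.+2 - i.+1 = s + m.+1 - i)%N by have := ltn_ord i; lia.
set A := QB _ c; set B := QB _ c.+1; set C := QB _ s.+1.
rewrite !mulSn !exprD !exprS /=; ring.
Qed.

Lemma R2b s m : V' s 0 m.+1 = 'X^(s + 2) * V' s 0 m + 'X^(m.+1) * QB (s + m.+2) s.+1.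
Proof.
rewrite /V' !mulr_sumr big_ord_recl addrC.
congr (_ + _); last first.
  by rewrite mul0n expr0 mul1r QB0 mul1r subn0.
apply: eq_bigr => i _; rewrite lift0 !QB0.
have -> : (s + m.+2 - i.+1 = s + m.+1 - i)%N by have := ltn_ord i; lia.
set C := QB _ s.+1.
rewrite !mulSn !exprD !exprS /=; ring.
Qed.

Definition V (s n k : nat) : {poly int} :=
  if ((s + 2 <= k) && (k < n))%N then V' s (k - (s + 2)) (n - k - 1) else 0.

Lemma VE s n k c m : k = (s + 2 + c)%N -> n = (k.+1 + m)%N -> V s n k = V' s c m.
Proof.
move=> Hk Hn; rewrite /V ifT; last by apply/andP; split; lia.
congr V'; lia.
Qed.

Lemma VZ s n k : ((k < s + 2) || (n <= k))%N -> V s n k = 0.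
Proof. move=> H; rewrite /V; case: ifP => // /andP [H1 H2]; exfalso; case/orP: H; lia. Qed.

Lemma V'00 s : V' s 0 0 = 1.
Proof.
rewrite /V' big_ord1.
have -> : (nat_of_ord (@ord0 0) * (s+1) = 0)%N by [].
have -> : (s + 1 - nat_of_ord (@ord0 0) = s.+1)%N by rewrite subn0 addn1.
by rewrite QB0 QBnn !expr0 !mul1r.
Qed.

Lemma Vrec s n k : V s n.+1 k.+1 = V s n k + 'X^(k.+1) * V s n k.+1
   + (if s.+1 == k then (Sp n k.+1)`_0 else 0).
Proof.
have [Hks|Hks] := ltnP k s.+1.
  have E : (s.+1 == k) = false by apply/eqP; lia.
  rewrite E !VZ ?mulr0 ?addr0 //; apply/orP; left; lia.
have [Hkn|Hkn] := ltnP k n; last first.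
  rewrite !VZ ?mulr0 ?addr0; try (apply/orP; right; lia).
  rewrite Sp_gt; last lia.
  by rewrite coef0 add0r; case: ifP.
have [c Hk] : exists c, k = (s.+1 + c)%N by exists (k - s.+1)%N; lia.
have [m Hn] : exists m, n = (k.+1 + m)%N by exists (n - k.+1)%N; lia.
case: c Hk => [|c] Hk.
  rewrite (@VE s n.+1 k.+1 0 m); try lia.
  rewrite (@VZ s n k); last by apply/orP; left; lia.
  rewrite ifT; last by apply/eqP; lia.
  have -> : Sp n k.+1 = Sp (s.+1 + m).+1 s.+2 by congr Sp; lia.
  rewrite a_closed add0r.
  have -> : (s.+1 + m - s.+1 = m)%N by lia.
  case: m Hn => [|m] Hn.
    rewrite (@VZ s n k.+1); last by apply/orP; right; lia.
    by rewrite V'00 mulr0 add0r addn0 QBnn mulr1.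
  rewrite (@VE s n k.+1 0 m); try lia.
  rewrite R2b.
  have -> : (s.+1 + m.+1 = s + m.+2)%N by lia.
  by have -> : (k.+1 = s + 2)%N by lia.
rewrite (@VE s n.+1 k.+1 c.+1 m); try lia.
rewrite (@VE s n k c m); try lia.
rewrite ifF; last by apply/eqP; lia.
rewrite addr0.
case: m Hn => [|m] Hn.
  rewrite (@VZ s n k.+1); last by apply/orP; right; lia.
  by rewrite R1a mulr0 addr0.
rewrite (@VE s n k.+1 c.+1 m); try lia.
rewrite R1b.
by have -> : (k.+1 = s + c + 3)%N by lia.
Qed.

Lemma b_closed n k : (Sp n k)`_1 = \sum_(s < n) s%:R * 'X^s * V s n k.
Proof.
elim: n k => [|n IH] k.
  by case: k => [|k]; rewrite big_ord0 ?coefC ?coef0.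
case: k => [|k].
  rewrite coef0 big1 // => s _; rewrite VZ ?mulr0 //; apply/orP; left; lia.
rewrite b_rec !IH big_ord_recr /=.
rewrite (@VZ n n.+1 k.+1) ?mulr0 ?addr0; last first.
  by case: (ltnP k.+1 (n + 2)) => H; apply/orP; [left|right]; lia.
under [in RHS]eq_bigr => s _ do rewrite Vrec !mulrDr.
rewrite !big_split /= mulr_sumr.
congr (_ + _ + _).
  by apply: eq_bigr => s _; ring.
rewrite (eq_bigr (fun s : 'I_n => if (s : nat) == k.-1 then (k.-1)%:R * 'X^(k.-1) * (Sp n k.+1)`_0 else 0)); last first.
  move=> s _; case: k => [|k] /=; first by rewrite mulr0; case: ifP => _; rewrite ?mul0r.
  by rewrite eqSS; case: eqP => [->|]; rewrite ?mulr0.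
rewrite -big_mkcond (big_ord1_eq _ (fun=> (k.-1)%:R * 'X^(k.-1) * (Sp n k.+1)`_0)).
case: k => [|k] /=; first by rewrite !mul0r; case: ifP.
rewrite subn1 /=; case: ifP => // H.
by rewrite Sp_gt ?coef0 ?mulr0 //; lia.
Qed.
Lemma ffallFS k : ffallF k.+1 = ffallF k * ('X - (Fib k)%:P).
Proof. by rewrite /ffallF big_ord_recr. Qed.

Lemma X_ffall k : 'X * ffallF k = ffallF k.+1 + Fib k *: ffallF k.
Proof. rewrite ffallFS -mul_polyC; ring. Qed.

Lemma Sp_expand n : ('X^n : {poly PQ}) = \sum_(k < n.+1) Sp n k *: ffallF k.
Proof.
elim: n => [|n IH].
  by rewrite big_ord1 /= scale1r /ffallF big_ord0 expr0.
rewrite exprS IH mulr_sumr.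
under eq_bigr => k _ do rewrite -scalerAr X_ffall scalerDr scalerA.
rewrite big_split.
rewrite [in RHS]big_ord_recl.
have -> : Sp n.+1 (@ord0 n.+1) = 0 by [].
rewrite scale0r add0r.
have HR : \sum_(i < n.+1) Sp n.+1 (lift ord0 i) *: ffallF (lift ord0 i) =
  \sum_(k < n.+1) (Sp n k *: ffallF k.+1 + (Fib k.+1 * Sp n k.+1) *: ffallF k.+1).
  by apply: eq_bigr => k _; rewrite lift0 SpS scalerDl.
rewrite HR.
rewrite big_split; congr (_ + _).
set g := fun k => (Fib k * Sp n k) *: ffallF k.
have H1 : \sum_(k < n.+1) (Sp n k * Fib k) *: ffallF k = \sum_(k < n.+1) g k.
  by apply: eq_bigr => k _; rewrite /g mulrC.
rewrite H1.
have E1 : \sum_(i < n.+2) g i = g 0%N + \sum_(i < n.+1) g i.+1.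
  by rewrite big_ord_recl.
have E2 : \sum_(i < n.+2) g i = \sum_(i < n.+1) g i + g n.+1.
  by rewrite big_ord_recr.
have G0 : g 0%N = 0 by rewrite /g mul0r scale0r.
have G1 : g n.+1 = 0 by rewrite /g Sp_gt // mulr0 scale0r.
rewrite E1 G0 G1 add0r addr0 in E2.
by rewrite -E2.
Qed.

Lemma size_ffallF k : size (ffallF k) = k.+1.
Proof. by rewrite /ffallF size_prod_XsubC /index_enum; unlock; rewrite -enumT size_enum_ord. Qed.

Lemma ffall_uniq m (c : nat -> PQ) :
  \sum_(k < m) c k *: ffallF k = 0 -> forall k, (k < m)%N -> c k = 0.
Proof.
elim: m => [|m IH] H k Hk //.
have Hm : c m = 0.
  have := congr1 (fun p : {poly PQ} => p`_m) H; rewrite coef0 big_ord_recr /= coefD coefZ.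
  rewrite coef_sum big1 ?add0r.
    have -> : (ffallF m)`_m = 1.
      have := lead_coefE (ffallF m); rewrite size_ffallF /= => <-.
      by apply/monicP; rewrite /ffallF monic_prod_XsubC.
    by rewrite mulr1.
  move=> i _; rewrite coefZ nth_default ?mulr0 // size_ffallF; exact: ltn_ord.
move: H; rewrite big_ord_recr /= Hm scale0r addr0 => H.
have [Hlt|Heq] := ltnP k m; first exact: IH.
by have -> : k = m by lia.
Qed.

Lemma Sf_Sp (Sf : nat -> nat -> PQ)
  (hSf : forall n : nat, ('X^n : {poly PQ}) = \sum_(k < n.+1) Sf n k *: ffallF k)
  n k : (k <= n)%N -> Sf n k = Sp n k.
Proof.
move=> Hk; apply/eqP; rewrite -subr_eq0; apply/eqP.
apply: (@ffall_uniq n.+1 (fun k => Sf n k - Sp n k)) => //.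
under eq_bigr => i _ do rewrite scalerBl.
by rewrite sumrB -hSf -Sp_expand subrr.
Qed.

Theorem theorem11 (Sf : nat -> nat -> PQ)
  (hSf : forall n : nat, ('X^n : {poly PQ}) = \sum_(k < n.+1) Sf n k *: ffallF k) :
  (forall n k : nat, (1 <= k)%N -> (k <= n)%N ->
     (Sf n k)`_0 = 'X^(n - k) * qbinom n.-1 k.-1)
  /\
  (forall n k : nat, (3 <= k)%N -> (k < n)%N ->
     (Sf n k)`_1 = 'X^(n - k) *
        \sum_(1 <= s < k - 1) (s%:R * 'X^(s - 1) *
          \sum_(0 <= i < n - k) ('X^(i * (s + 1)) * qbinom (i + k - s - 2) i
                                   * qbinom (s + n - k - i) s.+1))).
Proof.
split.
  move=> [|n] [|k] // _ Hkn.
  by rewrite (Sf_Sp _ hSf) // a_closed /= qbinomE // subSS.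
move=> n k H3 Hkn.
rewrite (Sf_Sp _ hSf n k (ltnW Hkn)).
rewrite b_closed.
have [m Hn] : exists m, n = (k.+1 + m)%N by exists (n - k.+1)%N; lia.

rewrite -(big_mkord xpredT (fun s => s%:R * 'X^s * V s n k)).
rewrite (big_cat_nat _ (n := 1)); last lia; last by [].
rewrite big_nat1 /=.
rewrite (big_cat_nat _ (n := k - 1)) /=; [|lia|lia].
rewrite !mul0r add0r.
rewrite [X in _ + X = _]big1_seq ?addr0; last first.
  move=> s; rewrite mem_index_iota => /andP [H1 H2].
  by rewrite VZ ?mulr0 //; apply/orP; left; lia.
rewrite mulr_sumr big_seq_cond [RHS]big_seq_cond.
apply: eq_bigr => s; rewrite andbT mem_index_iota => /andP [H1 H2].
rewrite (@VE s n k (k - (s + 2)) m); [|lia|lia].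
have -> : (n - k = m.+1)%N by lia.
rewrite /V' big_mkord !mulr_sumr; apply: eq_bigr => i _.
have Hi := ltn_ord i.
rewrite qbinomE; last lia.
rewrite qbinomE; last lia.
rewrite QB_sym; last lia.
have -> : (i + (k - (s + 2)) - (k - (s + 2)) = i)%N by lia.
have -> : (i + (k - (s + 2)) = i + k - s - 2)%N by lia.
have -> : (s + n - k - i = s + m.+1 - i)%N by lia.
set A := QB _ _; set B := QB _ _.
have -> : 'X^s = 'X * 'X^(s - 1) :> {poly int}.
  by rewrite -exprS; congr (_ ^+ _); lia.
rewrite exprS; ring.
Qed.
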